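(* For any $\ell\ge1$ and $a_1,\dots,a_\ell\in\{1,\dots,n\}$, the following equality holds in the reduction algebra $N/I$: $$P(x^{a_1}+I)\,P(x^{a_2}+I)\cdots P(x^{a_\ell}+I)=P(x^{a_1}x^{a_2}\cdots x^{a_\ell}+I).$$
   Context: $W_\eta(2n)$ is the unital associative $\mathbb{C}$-algebra generated by $x^a,\partial_a$ ($a=1,\dots,n$) and central elements $\eta_{ab},\eta^{ab}$ subject to $x^ax^b=x^bx^a$, $\partial_a\partial_b=\partial_b\partial_a$, $\partial_ax^b-x^b\partial_a=\delta_a^b$, $\eta_{ab}=\eta_{ba}$, $\sum_b\eta_{ab}\eta^{bc}=\delta_a^c$. Repeated upper/lower indices are summed; $x_a=\eta_{ab}x^b$, $\partial^a=\eta^{ab}\partial_b$; $E=\frac i2\partial_a\partial^a$, $F=\frac i2x_ax^a$, $H=-\frac12(x^a\partial_a+\partial_ax^a)$. $A$ is the localization of $W_\eta(2n)$ at the nonzero polynomials in $H$, $I=AE$ is the left ideal generated by $E$, $N=\{m\in A: Im\subset I\}$ its normalizer, and $N/I$ is the reduction algebra with product $(m+I)(m'+I)=mm'+I$. The extremal projector acts on $A/I$ by $P(w+I)=\sum_{k\ge0}\frac{(-1)^k}{k!}f_k(H)F^k(\operatorname{ad}E)^k(w)+I$, where $(\operatorname{ad}E)(y)=Ey-yE$, $f_0=1$ and $f_k(H)=\big((H+2)(H+3)\cdots(H+k+1)\big)^{-1}$; it is known that $P(w+I)\in N/I$ for all $w\in A$, that $P$ is the identity on $N/I$, and that $P(Fy+I)=0$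 for all $y\in A$. *)

(* Defs.v *)
From HB Require Import structures.
From mathcomp Require Import all_boot all_order all_algebra.
Set Implicit Arguments. Unset Strict Implicit. Unset Printing Implicit Defensive.
Import Order.TTheory GRing.Theory Num.Theory.
Local Open Scope ring_scope.

Section WeylEta.
Variables (R : numClosedFieldType) (B : unitAlgType R) (n : nat).
Variables (x d : 'I_n -> B) (etal etau : 'I_n -> 'I_n -> B).

(* Defining relations of W_eta(2n), read inside the algebra B. *)
Definition weyl_eta_rel : Prop :=
  (forall a b, x a * x b = x b * x a) /\
  (forall a b, d a * d b = d b * d a) /\
  (forall a b, d a * x b - x b * d a = (a == b)%:R) /\
  (forall a b y, etal a b * y = y * etal a b /\ etau a b * y = y * etau a b) /\
  (forall a b, etal a b = etal b a) /\
  (forall a c, \sum_b etal a b * etau b c = (a == c)%:R).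

Definition xlow a := \sum_b etal a b * x b.
Definition dup a := \sum_b etau a b * d b.

Definition Eop : B := ('i / 2 : R)%:A * \sum_a d a * dup a.
Definition Fop : B := ('i / 2 : R)%:A * \sum_a xlow a * x a.
Definition Hop : B := (- (1 / 2) : R)%:A * \sum_a (x a * d a + d a * x a).

Definition adE (y : B) : B := Eop * y - y * Eop.

Definition fk (k : nat) : B := (\prod_(2 <= j < k.+2) (Hop + j%:R))^-1.

(* Representative of P(w+I), with the sum over k < m; when (ad E)^m w = 0
   all further terms vanish, so this is the full series. *)
Definition Ptrunc (m : nat) (w : B) : B :=
  \sum_(k < m) ((-1) ^+ k / (k`!)%:R : R)%:A * fk k * Fop ^+ k * iter k adE w.

End WeylEta.

(* Main.v *)
Require Import Defs.
From HB Require Import structures.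
From mathcomp Require Import all_boot all_order all_algebra.
From mathcomp Require Import ring zify.
Import Order.TTheory GRing.Theory Num.Theory.
Local Open Scope ring_scope.

Section Proof.
Variables (R : numClosedFieldType) (B : unitAlgType R) (n : nat).
Variables (x d : 'I_n -> B) (etal etau : 'I_n -> 'I_n -> B).
Hypothesis rel : weyl_eta_rel x d etal etau.

Local Notation E := (Eop d etau).
Local Notation F := (Fop x etal).
Local Notation H := (Hop x d).
Local Notation ad := (adE d etau).

Definition cm (a b : B) := a * b - b * a.

Lemma cmMl a b c : cm (a * b) c = a * cm b c + cm a c * b.
Proof. by rewrite /cm mulrBr mulrBl !mulrA addrA subrK. Qed.

Lemma cmMr a b c : cm a (b * c) = cm a b * c + b * cm a c.
Proof. by rewrite /cm mulrBr mulrBl !mulrA addrA subrK. Qed.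

Lemma cm_suml I (r : seq I) (P : pred I) (f : I -> B) b :
  cm (\sum_(i <- r | P i) f i) b = \sum_(i <- r | P i) cm (f i) b.
Proof. by rewrite /cm mulr_suml mulr_sumr -sumrB. Qed.

Lemma cm_sumr I (r : seq I) (P : pred I) (f : I -> B) b :
  cm b (\sum_(i <- r | P i) f i) = \sum_(i <- r | P i) cm b (f i).
Proof. by rewrite /cm mulr_suml mulr_sumr -sumrB. Qed.

Lemma cmZl k a b : cm (k *: a) b = k *: cm a b.
Proof. by rewrite /cm -scalerAl -scalerAr scalerBr. Qed.

Lemma cmZr k a b : cm a (k *: b) = k *: cm a b.
Proof. by rewrite /cm -scalerAl -scalerAr scalerBr. Qed.

Lemma cmDl a b c : cm (a + b) c = cm a c + cm b c.
Proof. by rewrite /cm mulrDl mulrDr opprD addrACA. Qed.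

Lemma cmDr a b c : cm c (a + b) = cm c a + cm c b.
Proof. by rewrite /cm mulrDl mulrDr opprD addrACA. Qed.

Lemma cmN a b : cm a b = - cm b a.
Proof. by rewrite /cm opprB. Qed.

Lemma cm_eq a b : a * b = b * a + cm a b.
Proof. by rewrite /cm addrC subrK. Qed.

Lemma xx a b : x a * x b = x b * x a. Proof. by have := rel; rewrite /weyl_eta_rel => -[h _]. Qed.
Lemma dd a b : d a * d b = d b * d a. Proof. by have := rel; rewrite /weyl_eta_rel => -[_ [h _]]. Qed.
Lemma dx a b : cm (d a) (x b) = (a == b)%:R. Proof. rewrite /cm; by have := rel; rewrite /weyl_eta_rel => -[_ [_ [h _]]]. Qed.
Lemma clc a b y : etal a b * y = y * etal a b.
Proof. by have := rel; rewrite /weyl_eta_rel => -[_ [_ [_ [h _]]]]; case: (h a b y). Qed.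
Lemma cuc a b y : etau a b * y = y * etau a b.
Proof. by have := rel; rewrite /weyl_eta_rel => -[_ [_ [_ [h _]]]]; case: (h a b y). Qed.
Lemma lsym a b : etal a b = etal b a. Proof. by have := rel; rewrite /weyl_eta_rel => -[_ [_ [_ [_ [h _]]]]]. Qed.
Lemma linv a c : \sum_b etal a b * etau b c = (a == c)%:R.
Proof. by have := rel; rewrite /weyl_eta_rel => -[_ [_ [_ [_ [_ h]]]]]. Qed.

Lemma cm_l a b y : cm (etal a b) y = 0. Proof. by rewrite /cm clc subrr. Qed.
Lemma cm_u a b y : cm (etau a b) y = 0. Proof. by rewrite /cm cuc subrr. Qed.
Lemma cm_l' a b y : cm y (etal a b) = 0. Proof. by rewrite /cm clc subrr. Qed.
Lemma cm_u' a b y : cm y (etau a b) = 0. Proof. by rewrite /cm cuc subrr. Qed.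

Lemma sum_deltal a (f : 'I_n -> B) : \sum_b (a == b)%:R * f b = f a.
Proof.
rewrite (bigD1 a) //= eqxx mul1r big1 ?addr0 // => b nba.
by rewrite eq_sym (negbTE nba) mul0r.
Qed.

Lemma sum_deltar a (f : 'I_n -> B) : \sum_b f b * (b == a)%:R = f a.
Proof.
rewrite (bigD1 a) //= eqxx mulr1 big1 ?addr0 // => b nba.
by rewrite (negbTE nba) mulr0.
Qed.

Lemma uinv a c : \sum_b etau b a * etal b c = (c == a)%:R.
Proof.
rewrite -linv; apply: eq_bigr => b _; by rewrite cuc lsym.
Qed.

Lemma usym a c : etau a c = etau c a.
Proof.
have h1 : \sum_b (\sum_e etau e c * etal e b) * etau b a = etau c a.
  under eq_bigr => b _ do rewrite uinv eq_sym.
  exact: sum_deltal.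
have h2 : \sum_b (\sum_e etau e c * etal e b) * etau b a = etau a c.
  under eq_bigr => b _ do rewrite mulr_suml.
  rewrite exchange_big /=.
  under eq_bigr => e _ do under eq_bigr => b _ do rewrite -mulrA.
  under eq_bigr => e _ do rewrite -mulr_sumr linv.
  exact: sum_deltar.
by rewrite -h2 h1.
Qed.

Lemma sum_deltal2 a (f : 'I_n -> B) : \sum_b (b == a)%:R * f b = f a.
Proof. by under eq_bigr => b _ do rewrite eq_sym; exact: sum_deltal. Qed.

Lemma sum_deltar2 a (f : 'I_n -> B) : \sum_b f b * (a == b)%:R = f a.
Proof. by under eq_bigr => b _ do rewrite eq_sym; exact: sum_deltar. Qed.

Lemma cmxx a b : cm (x a) (x b) = 0. Proof. by rewrite /cm xx subrr. Qed.
Lemma cmdd a b : cm (d a) (d b) = 0. Proof. by rewrite /cm dd subrr. Qed.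
Lemma xd a b : cm (x a) (d b) = - (b == a)%:R. Proof. by rewrite cmN dx. Qed.

Lemma cm_dup_x a c : cm (dup d etau a) (x c) = etau a c.
Proof.
rewrite /dup cm_suml.
under eq_bigr => b _ do rewrite cmMl dx cm_u mul0r addr0.
exact: sum_deltar.
Qed.

Lemma cm_dup_d a c : cm (dup d etau a) (d c) = 0.
Proof.
rewrite /dup cm_suml big1 // => b _.
by rewrite cmMl cmdd cm_u mul0r mulr0 addr0.
Qed.

Lemma two_neq0 : (2%:R : R) != 0. Proof. by rewrite pnatr_eq0. Qed.

Lemma cmEx c : cm E (x c) = 'i *: dup d etau c.
Proof.
rewrite /Eop mulr_algl cmZl cm_suml.
under eq_bigr => a _ do rewrite cmMl cm_dup_x dx.
rewrite big_split /= sum_deltal2.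
have -> : \sum_a d a * etau a c = dup d etau c.
  by rewrite /dup; apply: eq_bigr => a _; rewrite -cuc usym.
by rewrite -mulr2n -scaler_nat scalerA divfK ?two_neq0.
Qed.

Lemma cmEd b : cm E (d b) = 0.
Proof.
rewrite /Eop mulr_algl cmZl cm_suml big1 ?scaler0 // => a _.
by rewrite cmMl cmdd cm_dup_d mulr0 mul0r addr0.
Qed.

Lemma cmEdup c : cm E (dup d etau c) = 0.
Proof.
rewrite /dup cm_sumr big1 // => b _.
by rewrite cmMr cmEd cm_u' mul0r mulr0 addr0.
Qed.

Lemma half_twice (y : B) : (- (1/2) : R) *: (y + y) = - y.
Proof.
by rewrite -mulr2n -scaler_nat scalerA mulNr mul1r mulVf ?two_neq0 // scaleN1r.
Qed.

Lemma cmHx c : cm H (x c) = - x c.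
Proof.
rewrite /Hop mulr_algl cmZl cm_suml.
under eq_bigr => a _ do rewrite cmDl cmMl cmMl dx cmxx mul0r addr0 mulr0 add0r.
by rewrite big_split /= sum_deltar sum_deltal2 half_twice.
Qed.

Lemma cmHd c : cm H (d c) = d c.
Proof.
rewrite /Hop mulr_algl cmZl cm_suml.
under eq_bigr => a _ do rewrite cmDl cmMl cmMl xd cmdd mul0r addr0 mulr0 add0r mulNr mulrN -opprD.
rewrite sumrN big_split /= sum_deltal sum_deltar2.
by rewrite scalerN half_twice opprK.
Qed.

Lemma cmHdup a : cm H (dup d etau a) = dup d etau a.
Proof.
rewrite /dup cm_sumr; apply: eq_bigr => b _.
by rewrite cmMr cmHd cm_u' mul0r add0r.
Qed.

Lemma cmHxlow c : cm H (xlow x etal c) = - xlow x etal c.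
Proof.
rewrite /xlow cm_sumr -sumrN; apply: eq_bigr => b _.
by rewrite cmMr cmHx cm_l' mul0r add0r mulrN.
Qed.

Lemma cmHE : cm H E = E *+ 2.
Proof.
rewrite /Eop !mulr_algl cmZr cm_sumr scalerMnr -sumrMnl; congr (_ *: _).
apply: eq_bigr => a _.
by rewrite cmMr cmHd cmHdup mulr2n.
Qed.

Lemma cmHF : cm H F = - (F *+ 2).
Proof.
rewrite /Fop !mulr_algl cmZr cm_sumr scalerMnr -sumrMnl -scalerN -sumrN; congr (_ *: _).
apply: eq_bigr => a _.
by rewrite cmMr cmHx cmHxlow mulrN mulNr mulr2n opprD.
Qed.

Lemma cmxF a : cm (x a) F = 0.
Proof.
rewrite /Fop !mulr_algl cmZr cm_sumr big1 ?scaler0 // => c _.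
rewrite cmMr cmxx mulr0 addr0 /xlow cm_sumr big1 ?mul0r // => b _.
by rewrite cmMr cmxx cm_l' mulr0 mul0r addr0.
Qed.

Lemma contract c : \sum_b etal c b * dup d etau b = d c.
Proof.
rewrite /dup.
under eq_bigr => b _ do rewrite mulr_sumr.
rewrite exchange_big /=.
under eq_bigr => e _ do under eq_bigr => b _ do rewrite mulrA.
under eq_bigr => e _ do rewrite -mulr_suml linv.
exact: sum_deltal.
Qed.

Lemma cmExlow c : cm E (xlow x etal c) = 'i *: d c.
Proof.
rewrite /xlow cm_sumr.
under eq_bigr => b _ do rewrite cmMr cmEx cm_l' mul0r add0r -scalerAr.
by rewrite -scaler_sumr contract.
Qed.

Lemma xlow_dup : \sum_c xlow x etal c * dup d etau c = \sum_c x c * d c.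
Proof.
rewrite /xlow.
under eq_bigr => c _ do rewrite mulr_suml.
rewrite exchange_big /=; apply: eq_bigr => b _.
under eq_bigr => c _ do rewrite clc -mulrA lsym.
by rewrite -mulr_sumr contract.
Qed.

Lemma i_half : ('i / 2 : R) * 'i = - (1 / 2).
Proof. by rewrite mulrAC -expr2 sqrCi mulNr. Qed.

Lemma cmEF : cm E F = H.
Proof.
rewrite /Fop /Hop !mulr_algl cmZr cm_sumr.
under eq_bigr => c _ do rewrite cmMr cmEx cmExlow -scalerAl -scalerAr -scalerDr.
rewrite -scaler_sumr scalerA i_half big_split /= xlow_dup addrC -big_split /=.
by congr (_ *: _); apply: eq_bigr => c _; rewrite addrC.
Qed.

Lemma EF : E * F = F * E + H.
Proof. by rewrite cm_eq cmEF. Qed.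

Hypothesis loc : forall p : {poly R}, p != 0 ->
     (map_poly (in_alg B) p).[H] \is a GRing.unit.

Definition Hc (c : R) := H + c%:A.

Lemma unitHc c : Hc c \is a GRing.unit.
Proof.
have := @loc _ (monic_neq0 (monicXaddC c)).
by rewrite rmorphD /= map_polyX map_polyC /= hornerD hornerX hornerC.
Qed.

Lemma Hc0 : Hc 0 = H.
Proof. by rewrite /Hc scale0r addr0. Qed.

Lemma EHc c : E * Hc c = Hc (c - 2) * E.
Proof.
have hE : E * H = H * E - E *+ 2 by rewrite -cmHE /cm opprB addrC subrK.
rewrite /Hc mulrDr mulrDl hE mulr_algr mulr_algl scalerBl scaler_nat.
by rewrite addrAC -addrA.
Qed.

Lemma FHc c : F * Hc c = Hc (c + 2) * F.
Proof.
have hF : F * H = H * F + F *+ 2 by rewrite -[F *+ 2]opprK -cmHF /cm opprB addrC subrK.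
rewrite /Hc mulrDr mulrDl hF mulr_algr mulr_algl scalerDl scaler_nat.
by rewrite addrAC -addrA.
Qed.

Lemma EHcV c : E * (Hc c)^-1 = (Hc (c - 2))^-1 * E.
Proof.
have u1 := unitHc c; have u2 := unitHc (c - 2).
apply: (mulIr u1); rewrite mulrVK // -mulrA EHc mulrA mulVr // mul1r //.
Qed.

Lemma natA j : (j%:R : B) = (j%:R : R)%:A.
Proof. by rewrite scaler_nat. Qed.

Lemma fk0 : fk x d 0 = 1.
Proof. by rewrite /fk big_geq // invr1. Qed.

Lemma fk1 : fk x d 1 = (Hc 2)^-1.
Proof. by rewrite /fk big_nat1 natA. Qed.

Definition Pi k := \prod_(2 <= j < k) (H + j%:R).

Lemma unitPi k : Pi k \is a GRing.unit.
Proof.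
rewrite /Pi; apply: (big_ind (fun z => z \is a GRing.unit)); first exact: unitr1.
  by move=> a b ua ub; rewrite unitrMl.
by move=> j _; rewrite natA; exact: unitHc.
Qed.

Lemma commHc a b : GRing.comm (Hc a) (Hc b).
Proof.
rewrite /GRing.comm /Hc !mulrDl !mulrDr !mulr_algl !mulr_algr !scalerA mulrC.
by rewrite !addrA [_ + a *: H]addrAC.
Qed.

Lemma commPi k c : GRing.comm (Hc c) (Pi k).
Proof.
apply: commr_prod => j _; rewrite natA; exact: commHc.
Qed.

Lemma fkS k : fk x d k.+1 * Hc (k.+2)%:R = fk x d k.
Proof.
rewrite /fk big_nat_recr //= -/(Pi k.+2) natA -/(Hc _).
have uP := unitPi k.+2; have uH := unitHc (k.+2)%:R.
rewrite invrM // -mulrA.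
by rewrite -(commrV (commPi _ _)) mulKr.
Qed.

Lemma FkHc k c : F ^+ k * Hc c = Hc (c + k%:R *+ 2) * F ^+ k.
Proof.
elim: k c => [|k IH] c; first by rewrite expr0 mul1r mulr1 mul0rn addr0.
rewrite exprSr -mulrA FHc mulrA IH -mulrA -exprSr.
congr (Hc _ * _); rewrite !mulr2n -!natr1.
ring.
Qed.

Lemma EkHcV k c : E ^+ k * (Hc c)^-1 = (Hc (c - k%:R *+ 2))^-1 * E ^+ k.
Proof.
elim: k c => [|k IH] c; first by rewrite expr0 mul1r mulr1 mul0rn subr0.
rewrite exprSr -mulrA EHcV mulrA IH -mulrA -exprSr.
congr ((Hc _)^-1 * _); rewrite -!natr1.
ring.
Qed.

Lemma Hc_lin a b a' b' : a + 1 = a' -> a * b = a' * b' -> H + a *: Hc b = a' *: Hc b'.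
Proof.
move=> <- e; rewrite /Hc !scalerDr !scalerA e scalerDl scale1r.
by rewrite addrA [H + _]addrC.
Qed.

Lemma EkF k : E ^+ k.+1 * F = F * E ^+ k.+1 + k.+1%:R *: (Hc (- k%:R) * E ^+ k).
Proof.
elim: k => [|k IH].
  by rewrite expr1 expr0 mulr1 scale1r oppr0 Hc0 EF.
rewrite exprS -mulrA IH mulrDr mulrA EF mulrDl -[F * E * _]mulrA -exprS.
rewrite -scalerAr [E * (Hc _ * _)]mulrA EHc -mulrA -exprS -addrA; congr (_ + _).
rewrite scalerAl -mulrDl [k.+2%:R *: _]scalerAl; congr (_ * _).
apply: Hc_lin; rewrite -!natr1; ring.
Qed.

Definition inI (z : B) := exists y, z = y * E.

Lemma inI0 : inI 0. Proof. by exists 0; rewrite mul0r. Qed.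
Lemma inIE y : inI (y * E). Proof. by exists y. Qed.
Lemma inID a b : inI a -> inI b -> inI (a + b).
Proof. by move=> [y ->] [z ->]; exists (y + z); rewrite mulrDl. Qed.
Lemma inIN a : inI a -> inI (- a).
Proof. by move=> [y ->]; exists (- y); rewrite mulNr. Qed.
Lemma inIB a b : inI a -> inI b -> inI (a - b).
Proof. by move=> ha hb; apply: inID => //; apply: inIN. Qed.
Lemma inIMl c a : inI a -> inI (c * a).
Proof. by move=> [y ->]; exists (c * y); rewrite mulrA. Qed.
Lemma inIZ k a : inI a -> inI (k *: a).
Proof. by move=> [y ->]; exists (k *: y); rewrite scalerAl. Qed.
Lemma inI_sum (I : finType) (f : I -> B) : (forall i, inI (f i)) -> inI (\sum_i f i).
Proof.
move=> h; apply: (big_ind inI); [exact: inI0| exact: inID| by move=> i _].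
Qed.

Lemma adcm y : ad y = cm E y. Proof. by []. Qed.

Lemma Ek_ad k z : inI (E ^+ k * z - iter k ad z).
Proof.
elim: k => [|k [y IH]]; first by rewrite /= expr0 mul1r subrr; exists 0; rewrite mul0r.
have -> : E ^+ k.+1 * z = E * (iter k ad z + y * E).
  by rewrite -IH addrC subrK exprS mulrA.
exists (iter k ad z + E * y).
by rewrite iterS adcm /cm mulrDr mulrDl mulrA opprB addrC !addrA subrK addrC.
Qed.

Lemma inI_mono k k' w : (k <= k')%N -> inI (E ^+ k * w) -> inI (E ^+ k' * w).
Proof.
by move=> le h; rewrite -(subnK le) exprD -mulrA; apply: inIMl.
Qed.

Arguments inI_mono [k k' w].

Lemma iter_ad0 k : iter k ad 0 = 0.
Proof. by elim: k => //= k ->; rewrite adcm /cm mulr0 mul0r subrr. Qed.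

Lemma iter_ad_ge m k w : iter m ad w = 0 -> (m <= k)%N -> iter k ad w = 0.
Proof. by move=> h le; rewrite -(subnK le) iterD h iter_ad0. Qed.

Lemma nil_mul j k z w : iter j ad z = 0 -> inI (E ^+ k * w) ->
  inI (E ^+ (j + k).-1 * (z * w)).
Proof.
elim: j k z w => [|j IHj] k z w.
  by move=> /= -> _; rewrite mul0r mulr0; exact: inI0.
elim: k w => [|k IHk] w hz hw.
  by case: hw => y; rewrite expr0 mul1r => ->; rewrite mulrA; exact: inIMl (inIE _).
rewrite addSn /= addnS exprSr -mulrA.
have -> : E * (z * w) = ad z * w + z * (E * w).
  by rewrite adcm /cm mulrBl [z * (E * w)]mulrA [E * (z * w)]mulrA subrK.
rewrite mulrDr; apply: inID.
  have := IHj k.+1 (ad z) w; rewrite addnS /=; apply => //.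
  by rewrite -iterSr.
have := IHk (E * w) hz; rewrite addSn /=; apply.
by rewrite mulrA -exprSr.
Qed.

Lemma mA4 (a b c e : B) : a * b * (c * e) = a * (b * c) * e.
Proof. by rewrite !mulrA. Qed.

Arguments nil_mul [j k z w].

Definition ck k := ((-1) ^+ k / (k`!)%:R : R).

Lemma Ptrunc_ext m M w : iter m ad w = 0 -> (m <= M)%N ->
  Ptrunc x d etal etau M w = Ptrunc x d etal etau m w.
Proof.
move=> h; elim: M => [|M IH] le; first by case: m h le.
case: (ltngtP m M.+1) le => // [lt _|-> //].
rewrite /Ptrunc big_ord_recr /= -/(Ptrunc x d etal etau M w) IH //.
by rewrite (@iter_ad_ge m M w h lt) mulr0 addr0.
Qed.

Definition Pel M := \sum_(k < M) (ck k)%:A * fk x d k * F ^+ k * E ^+ k.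

Lemma Pel_Ptrunc M w : inI (Ptrunc x d etal etau M w - Pel M * w).
Proof.
rewrite /Ptrunc /Pel mulr_suml -sumrB; apply: inI_sum => k.
rewrite -[_ * E ^+ k * w]mulrA -mulrBr; apply: inIMl.
rewrite -opprB; apply: inIN; exact: Ek_ad.
Qed.

Lemma ck0 : ck 0 = 1.
Proof. by rewrite /ck expr0 fact0 divr1. Qed.

Lemma Pel1 : Pel 1 = 1.
Proof. by rewrite /Pel big_ord1 ck0 scale1r fk0 !expr0 !mulr1. Qed.

Lemma Pel_Q M Q : inI (E * Q) -> inI (Pel M.+1 * Q - Q).
Proof.
move=> hQ; elim: M => [|M IH]; first by rewrite Pel1 mul1r subrr; exact: inI0.
rewrite /Pel big_ord_recr /= -/(Pel M.+1) mulrDl addrAC; apply: inID => //.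
rewrite [E ^+ M.+1]exprSr -mulrA -[E ^+ M * E * Q]mulrA.
by do 2 apply: inIMl.
Qed.

Lemma ckS M : ck M.+1 * M.+1%:R = - ck M.
Proof.
have h1 : (M`!%:R : R) != 0 by rewrite pnatr_eq0 -lt0n fact_gt0.
have h2 : (1 + M%:R : R) != 0 by rewrite addrC natr1 pnatr_eq0.
rewrite /ck factS natrM exprS -natr1; field.
by rewrite h1 addrC.
Qed.

Lemma Pel_F M : Pel M.+1 * F = ck M *: (fk x d M * F ^+ M.+1 * E ^+ M).
Proof.
elim: M => [|M IH].
  by rewrite Pel1 mul1r ck0 scale1r fk0 mul1r expr1 expr0 mulr1.
rewrite /Pel big_ord_recr /= -/(Pel M.+1) mulrDl IH.
rewrite -[_ * E ^+ M.+1 * F]mulrA EkF mulrDr.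
have e1 : F ^+ M.+1 * Hc (- M%:R) = Hc (M.+2)%:R * F ^+ M.+1.
  by rewrite FkHc; congr (Hc _ * _); rewrite mulr2n -!natr1; ring.
have key : (ck M.+1)%:A * fk x d M.+1 * F ^+ M.+1 *
    (M.+1%:R *: (Hc (- M%:R) * E ^+ M)) = - (ck M *: (fk x d M * F ^+ M.+1 * E ^+ M)).
  rewrite -scalerAr mulrA -[_ * F ^+ M.+1 * Hc _]mulrA e1 mulrA.
  rewrite -[_ * fk x d M.+1 * Hc _]mulrA fkS mulr_algl -!scalerAl scalerA.
  by rewrite mulrC ckS scaleNr.
rewrite key addrCA subrr addr0 mulr_algl -!scalerAl; congr (_ *: _).
by rewrite [F ^+ M.+2]exprSr; apply: mA4.
Qed.

Lemma zid (q p a f : B) : q - p = -((a + f) - q) + f - (p - a).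
Proof. by rewrite opprB opprD addrA subrK opprB addrA subrK. Qed.

Opaque Eop Fop Hop.

Lemma ED a : E * ad (x a) = ad (x a) * E.
Proof.
have h : cm E (ad (x a)) = 0 by rewrite adcm cmEx cmZr cmEdup scaler0.
by rewrite cm_eq h addr0.
Qed.

Lemma nil_x a : iter 2 ad (x a) = 0.
Proof. by rewrite /= [ad (ad _)]adcm /cm ED subrr. Qed.

Lemma nil_D a : iter 1 ad (ad (x a)) = 0.
Proof. by rewrite /= [ad (ad _)]adcm /cm ED subrr. Qed.

Lemma nil_F : iter 3 ad F = 0.
Proof.
rewrite /= !adcm cmEF [cm E H]cmN cmHE /cm mulrN mulNr mulrnAr mulrnAl opprK.
by rewrite addNr.
Qed.

Definition P1 a := x a - F * ((Hc 0)^-1 * ad (x a)).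

Lemma f1F : (Hc 2)^-1 * F = F * (Hc 0)^-1.
Proof.
apply: (mulIr (unitHc 0)); rewrite mulrVK ?unitHc //.
by rewrite -mulrA FHc add0r mulKr // unitHc.
Qed.

Lemma Ptrunc_x m a : (forall a, iter m ad (x a) = 0) ->
  Ptrunc x d etal etau m (x a) = P1 a.
Proof.
move=> hx.
have -> : Ptrunc x d etal etau m (x a) = Ptrunc x d etal etau 2 (x a).
  case: m hx => [|[|m]] hx.
  - have := dx a a; have /= -> := hx a; rewrite /cm eqxx mulr0 mul0r subrr => /eqP.
    by rewrite eq_sym oner_eq0.
  - by rewrite (@Ptrunc_ext 1 2 (x a) (hx a)).
  - by rewrite (@Ptrunc_ext 2 m.+2 (x a) (nil_x a)).
rewrite /Ptrunc !big_ord_recr big_ord0 /= add0r.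
have c1 : ((-1) ^+ 1 / (1`!)%:R : R) = -1 by rewrite expr1 (_ : 1`! = 1)%N // divr1.
rewrite c1 expr0 fact0 divr1 scale1r fk0 !mulr1 !mul1r expr1 fk1 scaleN1r mulN1r.
by rewrite mulNr mulNr f1F /P1 -mulrA.
Qed.

Lemma P1N a : inI (E * P1 a).
Proof.
exists (x a - F * ((Hc (0 - 2))^-1 * ad (x a))).
have e1 : E * x a = x a * E + ad (x a) by rewrite cm_eq.
have hH : H * ((Hc 0)^-1 * ad (x a)) = ad (x a).
  by rewrite -{1}Hc0 mulVKr // unitHc.
rewrite /P1 mulrBr e1 (mulrA E F) EF mulrDl hH.
rewrite -(mulrA F E) (mulrA E) EHcV -(mulrA _ E) ED.
rewrite (mulrBl E (x a)) (mulrA _ (ad (x a)) E) (mulrA F _ E).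
by rewrite opprD addrA addrAC addrK.
Qed.

Lemma prodx_nil s : inI (E ^+ (size s).+1 * \prod_(a <- s) x a).
Proof.
elim: s => [|a s IH]; first by rewrite big_nil mulr1 expr1; exists 1; rewrite mul1r.
by rewrite big_cons; have := nil_mul (nil_x a) IH; rewrite add2n.
Qed.

Lemma prodP1_N s : inI (E * \prod_(a <- s) P1 a).
Proof.
elim: s => [|a s IH]; first by rewrite big_nil mulr1; exists 1; rewrite mul1r.
have [y ey] := P1N a.
by rewrite big_cons mulrA ey -mulrA; apply: inIMl.
Qed.

Lemma alg1 (X G h D u w : B) : X * G = G * X ->
  (X - G * (h * D)) * (u + G * w) = X * u + G * (X * w - h * (D * u) - h * (D * (G * w))).
Proof.
move=> xG; rewrite mulrBl !mulrDr (mulrA X G) xG -(mulrA G X).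
by rewrite !mulrN -!mulrA opprD !addrA.
Qed.

Lemma decomp s : exists K w, \prod_(a <- s) P1 a = \prod_(a <- s) x a + F * w
  /\ inI (E ^+ K * w).
Proof.
elim: s => [|a s [K [w [eq hw]]]].
  by exists 0%N, 0; rewrite !big_nil mulr0 addr0; split => //; rewrite mulr0; exact: inI0.
set u := \prod_(b <- s) x b.
set h := (Hc 0)^-1.
exists (K + size s + 3)%N, (x a * w - h * (ad (x a) * u) - h * (ad (x a) * (F * w))).
split.
  rewrite !big_cons eq -/u /P1.
  have xF : x a * F = F * x a by rewrite cm_eq cmxF addr0.
  exact: alg1.
have hu := prodx_nil s; rewrite -/u in hu.
rewrite !mulrBr; apply: inIB; [apply: inIB|].
- apply: (inI_mono _ (nil_mul (nil_x a) hw)); rewrite /=.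
  lia.
- rewrite /h mulrA (EkHcV (K + size s + 3) 0) -mulrA; apply: inIMl.
  apply: (inI_mono _ (nil_mul (nil_D a) hu)).
  rewrite /=; lia.
- rewrite /h (mulrA (E ^+ _)) (EkHcV (K + size s + 3) 0) -mulrA; apply: inIMl.
  apply: (inI_mono _ (nil_mul (nil_D a) (nil_mul nil_F hw))).
  rewrite /=; lia.
Qed.

Lemma main s m : (forall a, iter m ad (x a) = 0) ->
  iter m ad (\prod_(a <- s) x a) = 0 ->
  inI (\prod_(a <- s) Ptrunc x d etal etau m (x a)
       - Ptrunc x d etal etau m (\prod_(a <- s) x a)).
Proof.
move=> hx hu.
rewrite (eq_bigr _ (fun a _ => @Ptrunc_x m a hx)).
have [K [w [eQ hw]]] := decomp s.
rewrite -(@Ptrunc_ext m (m + K).+1 _ hu (leq_trans (leq_addr K m) (leqnSn _))).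
set Q := \prod_(a <- s) P1 a.
set u := \prod_(a <- s) x a.
set P := Ptrunc x d etal etau (m + K).+1 u.
have h1 : inI (P - Pel (m + K).+1 * u) := Pel_Ptrunc (m + K).+1 u.
have h2 : inI (Pel (m + K).+1 * Q - Q) := @Pel_Q (m + K) _ (prodP1_N s).
have h3 : inI (Pel (m + K).+1 * (F * w)).
  rewrite (mulrA (Pel _) F w) Pel_F -scalerAl; apply: inIZ.
  rewrite -(mulrA _ (E ^+ _) w); apply: inIMl.
  exact: (inI_mono (leq_addl m K) hw).
have eP : Pel (m + K).+1 * Q = Pel (m + K).+1 * u + Pel (m + K).+1 * (F * w).
  by rewrite /Q eQ mulrDr.
rewrite (zid Q P (Pel (m + K).+1 * u) (Pel (m + K).+1 * (F * w))) -eP.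
apply: inIB => //; apply: inID => //; exact: inIN.
Qed.

End Proof.

Theorem mainTheorem6 (R : numClosedFieldType) (B : unitAlgType R) (n : nat)
    (x d : 'I_n -> B) (etal etau : 'I_n -> 'I_n -> B) :
  weyl_eta_rel x d etal etau ->
  (* localization: every nonzero polynomial in H is invertible *)
  (forall p : {poly R}, p != 0 ->
     (map_poly (in_alg B) p).[Hop x d] \is a GRing.unit) ->
  forall (s : seq 'I_n) (m : nat), (0 < size s)%N ->
  (forall a, iter m (adE d etau) (x a) = 0) ->
  iter m (adE d etau) (\prod_(a <- s) x a) = 0 ->
  exists y : B,
    \prod_(a <- s) Ptrunc x d etal etau m (x a)
      - Ptrunc x d etal etau m (\prod_(a <- s) x a)
    = y * Eop d etau.
Proof.
move=> rel loc s m _ hx hu.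
have [y ey] := @main R B n x d etal etau rel loc s m hx hu.
by exists y.
Qed.
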